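(* Let $L:\mathbb{R}^k\to\mathbb{R}^m$ be a minimal linear map such that $|S(L_i)|>1$ for all $i\in[m]$, $|S(L)|=k\geq 8$, and $t(L)>2^{k-1}$. Then the shape of $L$ is either a (2,1)-star or a (3,2)-star.
   Context: Let $\mathbb{H}^n=\{0,1\}^n$, and $e_1,\dots,e_k$ the standard basis of $\mathbb{R}^k$. For a linear map $L:\mathbb{R}^k\to\mathbb{R}^m$, set $I(L)=L^{-1}(\mathbb{H}^m)\cap\mathbb{H}^k$ and $t(L)=|I(L)|$. The support is $S(L)=\{i\in[k]: L(e_i)\neq 0\}$. For $i\in[m]$, $L_i=\pi_i\circ L:\mathbb{R}^k\to\mathbb{R}$ is the $i$-th coordinate of $L$. $L$ is called minimal if for every $i\in[m]$ we have $S(L_i)\not\subseteq\bigcup_{j\neq i}S(L_j)$ and $t(L_i)<2^k$. The shape of $L$ is the hypergraph with vertex set $\{1,\dots,k\}$ and edge set $\{S(L_i): i\in[m]\}$. A (2,1)-star is a 2-uniform hypergraph $(V,E)$ with a vertex $c\in V$ such that $E=\{\{c,v\}: v\in V\setminus\{c\}\}$. A (3,2)-star is a 3-uniform hypergraph $(V,E)$ with distinct $c_1,c_2\in V$ such that $E=\{\{c_1,c_2,v\}: v\in V\setminus\{c_1,c_2\}\}$. *)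

(* Defs.v *)
From HB Require Import structures.
From mathcomp Require Import all_boot all_order all_algebra.
From mathcomp Require Import reals.
Set Implicit Arguments. Unset Strict Implicit. Unset Printing Implicit Defensive.
Import Order.TTheory GRing.Theory Num.Theory.
Local Open Scope ring_scope.

(* A linear map L : R^k -> R^m is represented by its matrix A : 'M_(m,k),
   acting on column vectors: L x = A *m x. *)

(* The 0/1 column vector associated to b : {ffun 'I_k -> bool}; these are exactly
   the points of the hypercube H^k = {0,1}^k. *)
Definition hvec (R : realType) (k : nat) (b : {ffun 'I_k -> bool}) : 'cV[R]_k :=
  \col_j (b j)%:R.

Definition in_cube (R : realType) (m : nat) (y : 'cV[R]_m) : bool :=
  [forall i : 'I_m, (y i 0 == 0) || (y i 0 == 1)].

(* t(L) = |L^{-1}(H^m) ∩ H^k| *)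
Definition tL (R : realType) (m k : nat) (A : 'M[R]_(m, k)) : nat :=
  #|[set b : {ffun 'I_k -> bool} | in_cube (A *m hvec R b)]|.

Definition suppL (R : realType) (m k : nat) (A : 'M[R]_(m, k)) : {set 'I_k} :=
  [set j | col j A != 0].

(* L_i = pi_i o L, a map R^k -> R, represented by the 1 x k matrix row i A *)
Definition coordL (R : realType) (m k : nat) (A : 'M[R]_(m, k)) (i : 'I_m)
  : 'M[R]_(1, k) := row i A.

Definition minimal (R : realType) (m k : nat) (A : 'M[R]_(m, k)) : Prop :=
  forall i : 'I_m,
    ~~ (suppL (coordL A i) \subset \bigcup_(j | j != i) suppL (coordL A j))
    /\ (tL (coordL A i) < 2 ^ k)%N.

(* shape: edge set {S(L_i) : i in [m]} on the vertex set 'I_k *)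
Definition shapeL (R : realType) (m k : nat) (A : 'M[R]_(m, k)) : {set {set 'I_k}} :=
  [set suppL (coordL A i) | i : 'I_m].

Definition star21 (T : finType) (E : {set {set T}}) : Prop :=
  (forall e, e \in E -> #|e| = 2%N) /\
  exists c : T, E = [set [set c; v] | v in ~: [set c]].

Definition star32 (T : finType) (E : {set {set T}}) : Prop :=
  (forall e, e \in E -> #|e| = 3%N) /\
  exists c1 c2 : T, c1 != c2 /\
    E = [set [set c1; c2; v] | v in ~: [set c1; c2]].

(* Main.v *)
Require Import Defs.
From HB Require Import structures.
From mathcomp Require Import all_boot all_order all_algebra.
From mathcomp Require Import reals.
From Stdlib Require Import BinInt.
From Stdlib Require Import Lia.
Delimit Scope nat_scope with N.
Set Implicit Arguments. Unset Strict Implicit. Unset Printing Implicit Defensive.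
Import Order.TTheory GRing.Theory Num.Theory.

Local Open Scope Z_scope.
Definition omZ (y : Z) : nat :=
  if Z.eqb y 0 then 2%nat else if Z.eqb (Z.abs y) 1 then 1%nat else 0%nat.

Fixpoint addcolZ (cs col : list Z) : list Z :=
  match cs, col with c :: cs', d :: col' => (c + d)%Z :: addcolZ cs' col' | _, _ => nil end.

Fixpoint locsumZ (leaf : list nat -> nat) (D : list (list Z)) (cs : list Z) : nat :=
  match D with
  | nil => leaf (List.map omZ cs)
  | col :: D' => (locsumZ leaf D' cs + locsumZ leaf D' (addcolZ cs col))%nat
  end.

Definition enumcolZ (cp : list (list Z)) : list (list Z) :=
  List.fold_right (fun vals acc => List.flat_map (fun v => List.map (cons v) acc) vals) (nil :: nil) cp.
Definition enumDZ (pats : list (list (list Z))) : list (list (list Z)) :=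
  List.fold_right (fun cp acc => List.flat_map (fun c => List.map (cons c) acc) (enumcolZ cp)) (nil :: nil) pats.
Definition rngZ (K : nat) : list Z := List.map (fun i => Z.of_nat i - Z.of_nat K)%Z (List.seq 0 (S (Nat.add K K))).
Definition enumcsZ (q K : nat) : list (list Z) := enumcolZ (List.repeat (rngZ K) q).

Definition chkZ leaf pats (cond : list (list Z) -> bool) q K B :=
  List.forallb (fun D => implb (cond D)
     (List.forallb (fun cs => Nat.leb (locsumZ leaf D cs) B) (enumcsZ q K))) (enumDZ pats).

Definition PM : list Z := (-1 :: 1 :: nil)%Z.
Definition Z0 : list Z := (0 :: nil)%Z.
Definition ANY : list Z := (-1 :: 0 :: 1 :: nil)%Z.

Definition clampZ (K : nat) (c : Z) : Z := Z.max (- Z.of_nat K) (Z.min (Z.of_nat K) c).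

Lemma omZ_clamp K n c s : (n.+2 <= K)%coq_nat -> (Z.abs s <= Z.of_nat n)%Z ->
  omZ (c + s) = omZ (clampZ K c + s).
Proof.
move=> HK Hs; rewrite /omZ /clampZ.
case: (Z.eqb_spec (c + s) 0); case: (Z.eqb_spec (Z.max (- Z.of_nat K) (Z.min (Z.of_nat K) c) + s) 0);
case: (Z.eqb_spec (Z.abs (c + s)) 1); case: (Z.eqb_spec (Z.abs (Z.max (- Z.of_nat K) (Z.min (Z.of_nat K) c) + s)) 1);
 move=> *; try reflexivity; exfalso; lia.
Qed.

Definition Rel (n : nat) (cs cs' : list Z) :=
  List.Forall2 (fun c c' => forall s, (Z.abs s <= Z.of_nat n)%Z -> omZ (c + s) = omZ (c' + s)) cs cs'.

Definition bnd1 (col : list Z) := List.Forall (fun d => (Z.abs d <= 1)%Z) col.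

Lemma Rel_add n cs cs' col : Rel n.+1 cs cs' -> bnd1 col -> Rel n (addcolZ cs col) (addcolZ cs' col).
Proof.
elim: cs cs' col => [|c cs IH] [|c' cs'] [|d col] //= HR; inversion HR; subst => Hb; try by constructor.
inversion Hb; subst; constructor.
  move=> s Hs; have := H2 (d + s); rewrite !Z.add_assoc; apply.
  by move: H1 Hs; lia.

by apply: IH.
Qed.

Lemma locsumZ_Rel leaf D : List.Forall bnd1 D -> forall cs cs',
  Rel (List.length D) cs cs' -> locsumZ leaf D cs = locsumZ leaf D cs'.
Proof.
elim: D => [|col D IH] HD cs cs' HR /=.
  congr leaf; elim: HR => //= c c' l l' Hc _ ->; congr cons.
  by rewrite -(Z.add_0_r c) -(Z.add_0_r c'); apply: Hc.
inversion HD; subst.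
rewrite (IH H2 cs cs'); last first.
  apply: List.Forall2_impl HR => c c' Hc s Hs; apply: Hc; rewrite /=; lia.
by rewrite (IH H2 (addcolZ cs col) (addcolZ cs' col)) //; apply: Rel_add.
Qed.

Lemma in_enumcol cp c : List.Forall2 (fun d vals => List.In d vals) c cp -> List.In c (enumcolZ cp).
Proof.
elim=> [|d vals c' cp' Hd _ IH] /=; first by left.
by apply/List.in_flat_map; exists d; split => //; apply: List.in_map.
Qed.

Lemma in_enumD pats D : List.Forall2 (fun col cp => List.Forall2 (fun d vals => List.In d vals) col cp) D pats ->
  List.In D (enumDZ pats).
Proof.
elim=> [|col cp D' pats' Hc _ IH] /=; first by left.
by apply/List.in_flat_map; exists col; split; [apply: in_enumcol | apply: List.in_map].
Qed.

Lemma in_rng K c : List.In (clampZ K c) (rngZ K).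
Proof.
rewrite /rngZ; apply/List.in_map_iff; exists (Z.to_nat (clampZ K c + Z.of_nat K)).
rewrite /clampZ; split; first lia.
apply/List.in_seq; lia.
Qed.

Lemma in_enumcs q K cs : List.length cs = q -> List.In (List.map (clampZ K) cs) (enumcsZ q K).
Proof.
move=> <-; apply: in_enumcol; elim: cs => [|c cs IH] /=; constructor => //; exact: in_rng.
Qed.

Lemma chkZ_sound leaf pats cond q K B D cs : chkZ leaf pats cond q K B = true ->
  List.Forall2 (fun col cp => List.Forall2 (fun d vals => List.In d vals) col cp) D pats ->
  List.Forall bnd1 D -> ((List.length D).+2 <= K)%coq_nat ->
  cond D = true -> List.length cs = q -> (locsumZ leaf D cs <= B)%nat.
Proof.
move=> Hc HD Hb HK Hcond Hl.
rewrite (locsumZ_Rel leaf Hb (cs' := List.map (clampZ K) cs)); last first.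
  elim: cs {Hl} => [|c cs IH] /=; constructor => // s Hs; apply: omZ_clamp HK Hs.
move: Hc; rewrite /chkZ List.forallb_forall => /(_ D (in_enumD HD)); rewrite Hcond /=.
move/List.forallb_forall => /(_ _ (in_enumcs K Hl)).
by move/PeanoNat.Nat.leb_spec0/ssrnat.leP.
Qed.


Definition leafP (ns : list nat) : nat := List.fold_right Nat.mul 1%nat ns.
Definition leafPow (q : nat) (ns : list nat) : nat := Nat.pow (List.hd 0%nat ns) q.
Definition true2 (D : list (list Z)) := true.
Definition sqcond (D : list (list Z)) : bool :=
  match D with
  | (x1 :: y1 :: nil) :: (x2 :: y2 :: nil) :: nil => xorb (Z.eqb x1 x2) (Z.eqb y1 y2)
  | _ => false end.

Lemma c_alpha3 : chkZ leafP ((PM::Z0::Z0::nil)::(Z0::PM::Z0::nil)::(Z0::Z0::PM::nil)::nil) true2 3 5 32 = true.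
Proof. Time vm_compute. reflexivity. Qed.
Lemma c_beta3 : chkZ leafP ((PM::PM::ANY::nil)::(Z0::PM::PM::nil)::nil) true2 3 4 16 = true.
Proof. Time vm_compute. reflexivity. Qed.
Lemma c_beta4 : chkZ leafP ((PM::ANY::ANY::PM::nil)::(Z0::PM::PM::ANY::nil)::nil) true2 4 4 32 = true.
Proof. Time vm_compute. reflexivity. Qed.
Lemma c_gamma1 : chkZ leafP ((PM::Z0::Z0::nil)::(Z0::PM::PM::nil)::nil) true2 3 4 16 = true.
Proof. Time vm_compute. reflexivity. Qed.
Lemma c_gamma2 : chkZ leafP ((PM::Z0::Z0::nil)::(PM::PM::PM::nil)::nil) true2 3 4 16 = true.
Proof. Time vm_compute. reflexivity. Qed.
Lemma c_eps : chkZ leafP ((PM::Z0::nil)::(ANY::PM::nil)::(ANY::PM::nil)::(ANY::PM::nil)::nil) true2 2 6 32 = true.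
Proof. Time vm_compute. reflexivity. Qed.
Lemma c_eps2 : chkZ leafP ((PM::Z0::nil)::(PM::Z0::nil)::(PM::Z0::nil)::(PM::Z0::nil)::(ANY::PM::nil)::nil) true2 2 7 64 = true.
Proof. Time vm_compute. reflexivity. Qed.
Lemma c_sq : chkZ leafP ((PM::PM::nil)::(PM::PM::nil)::nil) sqcond 2 4 8 = true.
Proof. Time vm_compute. reflexivity. Qed.
Lemma c_S1_1 : chkZ (leafPow 1) (List.repeat (PM::nil) 7) true2 1 9 128 = true.
Proof. Time vm_compute. reflexivity. Qed.
Lemma c_S1_2 : chkZ (leafPow 2) (List.repeat (PM::nil) 6) true2 1 8 128 = true.
Proof. Time vm_compute. reflexivity. Qed.
Lemma c_S1_3 : chkZ (leafPow 3) (List.repeat (PM::nil) 3) true2 1 5 32 = true.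
Proof. Time vm_compute. reflexivity. Qed.
Local Close Scope Z_scope.
From mathcomp Require Import zify ring lra ssrZ.
Local Open Scope ring_scope.

Definition om (y : int) : nat := if y == 0 then 2%N else if (y == 1) || (y == -1) then 1%N else 0%N.
Definition b01 (y : int) : bool := (y == 0) || (y == 1).

Lemma om_char (y : int) : (b01 y + b01 (y + 1))%N = om y.
Proof. rewrite /om /b01. case: (y =P 0) => [->|H0] //. case: (y =P 1) => [->|H1] //.
case: (y =P -1) => [->|H2] //.
have -> : (y + 1 == 0) = false by apply/eqP; lia.
have -> : (y + 1 == 1) = false by apply/eqP; lia.
by [].
Qed.

Lemma om_le2 y : (om y <= 2)%N.
Proof. by rewrite /om; case: ifP => //; case: ifP. Qed.

Lemma om_opp y : om (- y) = om y.
Proof.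
rewrite /om oppr_eq0; case: (y == 0) => //.
have -> : (- y == 1) = (y == -1) by apply/eqP/eqP => H; lia.
have -> : (- y == -1) = (y == 1) by apply/eqP/eqP => H; lia.
by rewrite orbC.
Qed.

Fixpoint addcol (cs col : list int) : list int :=
  match cs, col with c :: cs', d :: col' => (c + d) :: addcol cs' col' | _, _ => nil end.
Fixpoint locsum (leaf : list nat -> nat) (D : list (list int)) (cs : list int) : nat :=
  match D with
  | nil => leaf (List.map om cs)
  | col :: D' => (locsum leaf D' cs + locsum leaf D' (addcol cs col))%N
  end.
Lemma addcol_map (T : Type) (f g : T -> int) s : addcol [seq f r | r <- s] [seq g r | r <- s] = [seq f r + g r | r <- s].
Proof. by elim: s => //= r s ->. Qed.
Lemma om_Z y : om y = omZ (Z_of_int y).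
Proof.
rewrite /om /omZ; case: (Z.eqb_spec (Z_of_int y) 0); case: eqP => //; try lia.
move=> H0 H0'; case: (Z.eqb_spec (Z.abs (Z_of_int y)) 1); case: eqP => //=; try lia;
 case: eqP => //; lia.
Qed.
Lemma locsum_toZ leaf D cs : locsum leaf D cs =
  locsumZ leaf (List.map (List.map Z_of_int) D) (List.map Z_of_int cs).
Proof.
elim: D cs => [|col D IH] cs /=.
  by congr leaf; elim: cs => //= c cs ->; rewrite om_Z.
rewrite !IH; congr (_ + locsumZ _ _ _)%N.
elim: cs col {IH} => [|c cs IH] [|d col] //=; rewrite IH; congr cons; lia.
Qed.

Section Core.
Variables (m k : nat) (a : 'I_m -> 'I_k -> int).

Definition bx := {ffun 'I_k -> bool}.
Definition fr (i : 'I_m) (x : bx) : int := \sum_j a i j * (x j)%:R.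
Definition good i x : bool := b01 (fr i x).
Definition Gs := [set x : bx | [forall i, good i x]].
Definition flip (j : 'I_k) (x : bx) : bx := [ffun v => if v == j then ~~ x v else x v].
Fixpoint SJ (J : seq 'I_k) (g : bx -> nat) (x : bx) : nat :=
  match J with [::] => g x | j :: J' => (SJ J' g x + SJ J' g (flip j x))%N end.

Lemma flipK j : involutive (flip j).
Proof. by move=> x; apply/ffunP=> v; rewrite !ffunE; case: eqP => // _; rewrite negbK. Qed.

Lemma flipC j l x : flip j (flip l x) = flip l (flip j x).
Proof. by apply/ffunP=> v; rewrite !ffunE; case: eqP; case: eqP. Qed.

Lemma flip_ne j l x : l != j -> flip j x l = x l.
Proof. by rewrite ffunE => /negbTE ->. Qed.

Lemma sum_flip j (g : bx -> nat) : (\sum_x g (flip j x) = \sum_x g x)%N.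
Proof. by rewrite [RHS](reindex_inj (inv_inj (flipK j))). Qed.

Lemma sum_SJ J g : (\sum_x SJ J g x = 2 ^ size J * \sum_x g x)%N.
Proof.
elim: J => [|j J IH] /=; first by rewrite mul1n.
by rewrite big_split /= (sum_flip j (SJ J g)) IH addnn -mul2n expnS mulnA.
Qed.

Lemma SJ_mono J (g g' : bx -> nat) x : (forall y, g y <= g' y)%N -> (SJ J g x <= SJ J g' x)%N.
Proof. by move=> H; elim: J x => [|j J IH] x /=; [apply: H | rewrite leq_add]. Qed.

Lemma SJ_scale J c (g : bx -> nat) x : SJ J (fun y => c * g y)%N x = (c * SJ J g x)%N.
Proof. by elim: J x => [|j J IH] x //=; rewrite !IH mulnDr. Qed.

Definition dl (i : 'I_m) (j : 'I_k) (x : bx) : int := a i j * ((~~ x j)%:R - (x j)%:R).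

Lemma fr_flip i j x : fr i (flip j x) = fr i x + dl i j x.
Proof.
rewrite /fr /dl (bigD1 j) //= [in RHS](bigD1 j) //= ffunE eqxx.
rewrite (eq_bigr (fun v => a i v * (x v)%:R)); last by move=> v /negbTE Hv; rewrite ffunE Hv.
by rewrite mulrBr; ring.
Qed.

Lemma dl_flip i j l x : l != j -> dl i j (flip l x) = dl i j x.
Proof. by move=> H; rewrite /dl flip_ne // eq_sym. Qed.


Variable p : 'I_m -> 'I_k.
Hypothesis Hpriv : forall i i', i' != i -> a i' (p i) = 0.
Hypothesis Hp1 : forall i, (a i (p i) == 1) || (a i (p i) == -1).

Lemma fr_flipP i i' x : i' != i -> fr i' (flip (p i) x) = fr i' x.
Proof. by move=> H; rewrite fr_flip /dl Hpriv // mul0r addr0. Qed.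

Lemma good_flipP i i' x : i' != i -> good i' (flip (p i) x) = good i' x.
Proof. by move=> H; rewrite /good fr_flipP. Qed.

Definition omg (i : 'I_m) (x : bx) : nat := (good i x + good i (flip (p i) x))%N.

Lemma omg_flipP i i' x : i' != i -> omg i' (flip (p i) x) = omg i' x.
Proof. by move=> H; rewrite /omg flipC (good_flipP _ H) (good_flipP _ H). Qed.

Lemma SP rs : uniq rs -> forall x,
  SJ [seq p i | i <- rs] (fun y => \prod_i (good i y : nat))%N x =
  (\prod_(i <- rs) omg i x * \prod_(i | i \notin rs) (good i x : nat))%N.
Proof.
elim: rs => [|r rs IH] /=.
  by move=> _ x; rewrite big_nil mul1n; apply: eq_bigl => i.
case/andP=> rnin urs x; rewrite !IH //.
have E1 : forall y, (\prod_(i | i \notin rs) (good i y : nat) =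
    good r y * \prod_(i | i \notin r :: rs) (good i y : nat))%N.
  move=> y; rewrite (bigD1 r) //=; congr (_ * _)%N; apply: eq_bigl => i.
  by rewrite in_cons negb_or andbC.
rewrite !E1.
have E2 : (\prod_(i <- rs) omg i (flip (p r) x) = \prod_(i <- rs) omg i x)%N.
  rewrite big_seq_cond [RHS]big_seq_cond; apply: eq_bigr => i /andP[irs _].
  by apply: omg_flipP; apply: contraNneq rnin => <-.
have E3 : (\prod_(i | i \notin r :: rs) (good i (flip (p r) x) : nat) =
    \prod_(i | i \notin r :: rs) (good i x : nat))%N.
  apply: eq_bigr => i; rewrite in_cons negb_or => /andP[ir _].
  by rewrite good_flipP.
rewrite E2 E3 big_cons /omg; ring.
Qed.

Definition F (x : bx) : nat := (\prod_i omg i x)%N.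

Lemma card_Gs_sum : #|Gs| = (\sum_x \prod_i (good i x : nat))%N.
Proof.
rewrite -sum1_card big_mkcond /=; apply: eq_bigr => x _.
rewrite inE; case: (boolP [forall i, good i x]) => H.
  by rewrite big1 // => i _; move/forallP: H => ->.
move/forallPn: H => [i Hi]; by rewrite (bigD1 i) //= (negbTE Hi) mul0n.
Qed.

Lemma sumF : (\sum_x F x = 2 ^ m * #|Gs|)%N.
Proof.
rewrite card_Gs_sum -{1}(size_enum_ord m) -(size_map p) -sum_SJ.
apply: eq_bigr => x _; rewrite SP ?enum_uniq //.
rewrite [X in (_ * X)%N]big_pred0; last by move=> i; rewrite mem_enum.
by rewrite muln1 /F big_enum.
Qed.

Definition h (i : 'I_m) (x : bx) : int :=
  fr i x - a i (p i) * (x (p i))%:R - (a i (p i) == -1)%:R.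

Lemma omg_om i x : omg i x = om (h i x).
Proof.
have kA : forall y z w : int, z = y + 1 -> w = y -> (b01 y + b01 z)%N = om w.
  by move=> y z w -> ->; rewrite om_char.
have kB : forall y z w : int, y = z + 1 -> w = z -> (b01 y + b01 z)%N = om w.
  by move=> y z w -> ->; rewrite addnC om_char.
rewrite /omg /good fr_flip /dl /h.
case/orP: (Hp1 i) => /eqP ->; case: (x (p i)) => /=.
- by apply: kB; lia.
- by apply: kA; lia.
- by apply: kA; lia.
- by apply: kB; lia.
Qed.

Lemma h_flip i j x : j != p i -> h i (flip j x) = h i x + dl i j x.
Proof. by move=> H; rewrite /h fr_flip flip_ne; [ring | rewrite eq_sym]. Qed.


Lemma Fh y : F y = (\prod_i om (h i y))%N.
Proof. by apply: eq_bigr => i _; rewrite omg_om. Qed.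

Lemma SJ_loc leaf J rs x : uniq J -> (forall j i, j \in J -> j != p i) ->
  SJ J (fun y => leaf (List.map om [seq h r y | r <- rs])) x =
  locsum leaf [seq [seq dl r j x | r <- rs] | j <- J] [seq h r x | r <- rs].
Proof.
elim: J x => [|j J IH] x //= /andP[jnJ uJ] HJ.
rewrite !IH //; last 2 first.
- by move=> j0 i Hj0; apply: HJ; rewrite in_cons Hj0 orbT.
- by move=> j0 i Hj0; apply: HJ; rewrite in_cons Hj0 orbT.
have -> : [seq [seq dl r j0 (flip j x) | r <- rs] | j0 <- J] = [seq [seq dl r j0 x | r <- rs] | j0 <- J].
  apply/eq_in_map => j0 Hj0; apply: eq_map => r; apply: dl_flip.
  by apply: contraNneq jnJ => ->.
congr (_ + locsum _ _ _)%N.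
rewrite addcol_map; apply: eq_map => r; apply: h_flip.
by apply: HJ; rewrite in_cons eqxx.
Qed.

Lemma card_bx : #|{: bx}| = (2 ^ k)%N.
Proof. by rewrite card_ffun card_bool card_ord. Qed.

Lemma witness J rs q leaf : uniq J -> (forall j i, j \in J -> j != p i) -> (q <= m)%N ->
  (forall y, F y <= 2 ^ (m - q) * leaf (List.map om [seq h r y | r <- rs]))%N ->
  (forall x, 2 * locsum leaf [seq [seq dl r j x | r <- rs] | j <- J] [seq h r x | r <- rs]
     <= 2 ^ (size J + q))%N ->
  (2 * #|Gs| <= 2 ^ k)%N.
Proof.
move=> uJ HJ Hq HF Hl.
have H1 : forall x, (2 * SJ J F x <= 2 ^ (size J + m))%N.
  move=> x; apply: (@leq_trans (2 * (2 ^ (m - q) * locsum leaf [seq [seq dl r j x | r <- rs] | j <- J] [seq h r x | r <- rs])))%N.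
    rewrite leq_mul2l /= -SJ_loc // -SJ_scale; exact: SJ_mono.
  rewrite mulnCA (@leq_trans (2 ^ (m - q) * 2 ^ (size J + q)))%N //.
    by rewrite leq_mul2l Hl orbT.
  by rewrite -expnD addnCA subnK.
have H2 : (2 * \sum_x SJ J F x <= 2 ^ k * 2 ^ (size J + m))%N.
  rewrite big_distrr /= -card_bx -sum1_card big_distrl /=.
  by apply: leq_sum => x _; rewrite mul1n.
move: H2; rewrite sum_SJ sumF.
have -> : (2 * (2 ^ size J * (2 ^ m * #|Gs|)) = 2 ^ (size J + m) * (2 * #|Gs|))%N.
  by rewrite expnD; ring.
by rewrite [X in (_ <= X)%N]mulnC leq_pmul2l ?expn_gt0.
Qed.

Lemma leafP_map rs y : leafP (List.map om [seq h r y | r <- rs]) = (\prod_(r <- rs) om (h r y))%N.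
Proof. by elim: rs => [|r rs IH] /=; rewrite ?big_nil ?big_cons // IH. Qed.

Lemma F_prod rs y : uniq rs -> (F y <= 2 ^ (m - size rs) * leafP (List.map om [seq h r y | r <- rs]))%N.
Proof.
move=> urs; rewrite leafP_map Fh (bigID (mem rs)) /= -big_uniq // mulnC leq_mul2r.
apply/orP; right.
apply: (@leq_trans (\prod_(i | i \notin rs) 2))%N.
  by apply: leq_prod => i _; apply: om_le2.
rewrite prod_nat_const.
have -> : #|[pred i | i \notin rs]| = (m - size rs)%N.
  have Hc := cardC (mem rs); rewrite card_ord (card_uniqP urs) in Hc.
  have E : #|[pred i | i \notin rs]| = #|[predC mem rs]| by apply: eq_card => i; rewrite !inE.
  rewrite E; move: Hc; set Y := #|_| => Hc.
  have Hc2 : (size rs + Y = m)%N := Hc.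
  lia.
by [].
Qed.


Hypothesis H01 : forall i j, (a i j == 0) || (a i j == 1) || (a i j == -1).

Lemma dl_cases r j x : a r j != 0 -> (dl r j x == 1) || (dl r j x == -1).
Proof.
move=> H; move: (H01 r j); rewrite (negbTE H) /= /dl.
by case/orP => /eqP ->; case: (x j) => /=.
Qed.

Lemma inPM r j x : a r j != 0 -> List.In (Z_of_int (dl r j x)) PM.
Proof. by move/(dl_cases x)/orP => [] /eqP -> /=; auto. Qed.

Lemma inZ0 r j x : a r j = 0 -> List.In (Z_of_int (dl r j x)) Z0.
Proof. by move=> H; rewrite /dl H mul0r /=; auto. Qed.

Lemma inANY r j x : List.In (Z_of_int (dl r j x)) ANY.
Proof.
case: (boolP (a r j == 0)) => [/eqP H|H]; first by rewrite /dl H mul0r /=; auto.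
by move/orP: (dl_cases x H) => [] /eqP -> /=; auto.
Qed.

Lemma bnd_dl rs J x : List.Forall bnd1 (List.map (List.map Z_of_int) [seq [seq dl r j x | r <- rs] | j <- J]).
Proof.
elim: J => [|j J IH] /=; constructor => //.
elim: {IH} rs => [|r rs IHr] /=; constructor => //.
have := inANY r j x; rewrite /ANY /=; move=> [<-|[<-|[<-|[]]]] /=; lia.
Qed.

Lemma len_map2 (T1 T2 : Type) (f : T1 -> T2) s : List.length (List.map f s) = size s.
Proof. by elim: s => //= x s ->. Qed.

Lemma use_chk J rs q leaf pats cond K B :
  uniq J -> (forall j i, j \in J -> j != p i) -> (q <= m)%N ->
  (forall y, F y <= 2 ^ (m - q) * leaf (List.map om [seq h r y | r <- rs]))%N ->
  chkZ leaf pats cond (size rs) K B = true -> ((size J).+2 <= K)%coq_nat ->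
  (2 * B <= 2 ^ (size J + q))%N ->
  (forall x, List.Forall2 (fun col cp => List.Forall2 (fun d vals => List.In d vals) col cp)
      (List.map (List.map Z_of_int) [seq [seq dl r j x | r <- rs] | j <- J]) pats /\
      cond (List.map (List.map Z_of_int) [seq [seq dl r j x | r <- rs] | j <- J]) = true) ->
  (2 * #|Gs| <= 2 ^ k)%N.
Proof.
move=> uJ HJ Hq HF Hc HK HB Hpat; apply: (witness uJ HJ Hq HF) => x.
apply: leq_trans HB; rewrite leq_mul2l /= locsum_toZ.
case: (Hpat x) => H1 H2; apply: (chkZ_sound Hc H1 (bnd_dl rs J x)) => //.
- by rewrite !len_map2 size_map.
- by rewrite !len_map2 size_map.
Qed.

Ltac pat_rec := cbv beta; lazymatch goal with
 | |- List.Forall2 _ nil nil => apply: List.Forall2_nil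
 | |- List.Forall2 _ (_ :: _) (_ :: _) => apply: List.Forall2_cons; [pat_rec | pat_rec]
 | |- List.In _ _ => first [ apply: inANY | apply: inPM; assumption | apply: inZ0; assumption ]
 end.

Ltac solve_pat := split; [ rewrite /=; pat_rec | by [] ].

Lemma F_prod_q (rs : seq 'I_m) : uniq rs -> (size rs <= m)%N -> forall y,
  (F y <= 2 ^ (m - size rs) * leafP (List.map om [seq h r y | r <- rs]))%N.
Proof. by move=> u _ y; apply: F_prod. Qed.

Lemma uniq_le (rs : seq 'I_m) : uniq rs -> (size rs <= m)%N.
Proof. by move=> u; rewrite -(card_uniqP u); apply: leq_trans (max_card _) _; rewrite card_ord. Qed.

Definition Mset := [set j : 'I_k | [forall i, p i != j]].

Lemma JM (J : seq 'I_k) : (forall j, j \in J -> j \in Mset) -> forall j i, j \in J -> j != p i.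
Proof. move=> H j i /H; rewrite inE => Hf; have := fintype.forallP Hf i; by rewrite eq_sym. Qed.

Lemma JM2 v l : v \in Mset -> l \in Mset -> forall j i, j \in [:: v; l] -> j != p i.
Proof. by move=> vM lM; apply: JM => j; rewrite !in_cons in_nil orbF => /orP[] /eqP ->. Qed.

Lemma case_beta4 v l ra rb rc rd : v != l -> v \in Mset -> l \in Mset ->
  uniq [:: ra; rb; rc; rd] ->
  a ra v != 0 -> a ra l = 0 -> a rb l != 0 -> a rc l != 0 -> a rd v != 0 ->
  (2 * #|Gs| <= 2 ^ k)%N.
Proof.
move=> vl vM lM u H1 H2 H3 H4 H5.
have uJ : uniq [:: v; l] by rewrite /= inE vl.
apply: (use_chk uJ (JM2 vM lM) (uniq_le u) (F_prod_q u (uniq_le u)) c_beta4) => //.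
by move=> x; solve_pat.
Qed.

Lemma JMa (J : seq 'I_k) : all (fun j => j \in Mset) J -> forall j i, j \in J -> j != p i.
Proof. by move=> /allP H; apply: JM => j /H. Qed.

Lemma case_beta3 v l ra rb rc : v != l -> v \in Mset -> l \in Mset ->
  uniq [:: ra; rb; rc] ->
  a ra v != 0 -> a ra l = 0 -> a rb v != 0 -> a rb l != 0 -> a rc l != 0 ->
  (2 * #|Gs| <= 2 ^ k)%N.
Proof.
move=> vl vM lM u H1 H2 H3 H4 H5.
have uJ : uniq [:: v; l] by rewrite /= inE vl.
apply: (use_chk uJ (JM2 vM lM) (uniq_le u) (F_prod_q u (uniq_le u)) c_beta3) => //.
by move=> x; solve_pat.
Qed.

Lemma case_gamma1 v l ri rb rc : v != l -> v \in Mset -> l \in Mset ->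
  uniq [:: ri; rb; rc] ->
  a ri v != 0 -> a rb v = 0 -> a rc v = 0 -> a ri l = 0 -> a rb l != 0 -> a rc l != 0 ->
  (2 * #|Gs| <= 2 ^ k)%N.
Proof.
move=> vl vM lM u H1 H2 H3 H4 H5 H6.
have uJ : uniq [:: v; l] by rewrite /= inE vl.
apply: (use_chk uJ (JM2 vM lM) (uniq_le u) (F_prod_q u (uniq_le u)) c_gamma1) => //.
by move=> x; solve_pat.
Qed.

Lemma case_gamma2 v l ri rb rc : v != l -> v \in Mset -> l \in Mset ->
  uniq [:: ri; rb; rc] ->
  a ri v != 0 -> a rb v = 0 -> a rc v = 0 -> a ri l != 0 -> a rb l != 0 -> a rc l != 0 ->
  (2 * #|Gs| <= 2 ^ k)%N.
Proof.
move=> vl vM lM u H1 H2 H3 H4 H5 H6.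
have uJ : uniq [:: v; l] by rewrite /= inE vl.
apply: (use_chk uJ (JM2 vM lM) (uniq_le u) (F_prod_q u (uniq_le u)) c_gamma2) => //.
by move=> x; solve_pat.
Qed.

Lemma case_alpha3 v1 v2 v3 r1 r2 r3 : uniq [:: v1; v2; v3] ->
  all (fun j => j \in Mset) [:: v1; v2; v3] -> uniq [:: r1; r2; r3] ->
  a r1 v1 != 0 -> a r2 v1 = 0 -> a r3 v1 = 0 ->
  a r1 v2 = 0 -> a r2 v2 != 0 -> a r3 v2 = 0 ->
  a r1 v3 = 0 -> a r2 v3 = 0 -> a r3 v3 != 0 ->
  (2 * #|Gs| <= 2 ^ k)%N.
Proof.
move=> uJ JM' u H1 H2 H3 H4 H5 H6 H7 H8 H9.
apply: (use_chk uJ (JMa JM') (uniq_le u) (F_prod_q u (uniq_le u)) c_alpha3) => //.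
by move=> x; solve_pat.
Qed.

Lemma case_eps v w1 w2 w3 r1 r2 : uniq [:: v; w1; w2; w3] ->
  all (fun j => j \in Mset) [:: v; w1; w2; w3] -> r1 != r2 ->
  a r1 v != 0 -> a r2 v = 0 -> a r2 w1 != 0 -> a r2 w2 != 0 -> a r2 w3 != 0 ->
  (2 * #|Gs| <= 2 ^ k)%N.
Proof.
move=> uJ JM' r12 H1 H2 H3 H4 H5.
have u : uniq [:: r1; r2] by rewrite /= inE r12.
apply: (use_chk uJ (JMa JM') (uniq_le u) (F_prod_q u (uniq_le u)) c_eps) => //.
by move=> x; solve_pat.
Qed.

Lemma case_eps2 u1 u2 u3 u4 w r1 r2 : uniq [:: u1; u2; u3; u4; w] ->
  all (fun j => j \in Mset) [:: u1; u2; u3; u4; w] -> r1 != r2 ->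
  a r1 u1 != 0 -> a r1 u2 != 0 -> a r1 u3 != 0 -> a r1 u4 != 0 ->
  a r2 u1 = 0 -> a r2 u2 = 0 -> a r2 u3 = 0 -> a r2 u4 = 0 -> a r2 w != 0 ->
  (2 * #|Gs| <= 2 ^ k)%N.
Proof.
move=> uJ JM' r12 H1 H2 H3 H4 H5 H6 H7 H8 H9.
have u : uniq [:: r1; r2] by rewrite /= inE r12.
apply: (use_chk uJ (JMa JM') (uniq_le u) (F_prod_q u (uniq_le u)) c_eps2) => //.
by move=> x; solve_pat.
Qed.

Definition pm1 (y : int) := (y == 1) || (y == -1).
Lemma pm_eq (y1 y2 s1 s2 : int) : pm1 y1 -> pm1 y2 -> pm1 s1 -> pm1 s2 ->
  (y1 * s1 == y2 * s2) = ((y1 == y2) == (s1 == s2)).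
Proof. by do 4! case/orP => /eqP ->. Qed.

Lemma eqZ (y z : int) : Z.eqb (Z_of_int y) (Z_of_int z) = (y == z).
Proof. case: (Z.eqb_spec (Z_of_int y) (Z_of_int z)); case: eqP => //; lia. Qed.

Lemma pm1a r j : a r j != 0 -> pm1 (a r j).
Proof. by move=> H; move: (H01 r j); rewrite (negbTE H). Qed.

Lemma pm1s (x : bx) j : pm1 ((~~ x j)%:R - (x j)%:R).
Proof. by rewrite /pm1; case: (x j). Qed.

Lemma case_sq v l i r0 : v != l -> v \in Mset -> l \in Mset -> i != r0 ->
  a i v != 0 -> a i l != 0 -> a r0 v != 0 -> a r0 l != 0 ->
  (a i v == a i l) != (a r0 v == a r0 l) ->
  (2 * #|Gs| <= 2 ^ k)%N.
Proof.
move=> vl vM lM ir H1 H2 H3 H4 Hmis.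
have uJ : uniq [:: v; l] by rewrite /= inE vl.
have u : uniq [:: i; r0] by rewrite /= inE ir.
apply: (use_chk uJ (JM2 vM lM) (uniq_le u) (F_prod_q u (uniq_le u)) c_sq) => //.
move=> x; split; first by rewrite /=; pat_rec.
rewrite /= /sqcond !eqZ /dl !pm_eq ?pm1a ?pm1s //.
by move: Hmis; case: (a i v == a i l); case: (a r0 v == a r0 l);
  case: (((~~ x v)%:R - (x v)%:R : int) == (~~ x l)%:R - (x l)%:R).
Qed.

Lemma natpowE (n q : nat) : Nat.pow n q = (n ^ q)%N.
Proof. by elim: q => //= q ->; rewrite expnS. Qed.

Lemma all_PM (J : seq 'I_k) r0 x : (forall j, j \in J -> a r0 j != 0) ->
  List.Forall2 (fun col cp => List.Forall2 (fun d vals => List.In d vals) col cp)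
      (List.map (List.map Z_of_int) [seq [seq dl r j x | r <- [:: r0]] | j <- J])
      (List.repeat (PM :: nil) (size J)).
Proof.
elim: J => [|j J IH] H /=; constructor.
  constructor; last constructor; apply: inPM; apply: H; exact: mem_head.
by apply: IH => j0 Hj0; apply: H; rewrite in_cons Hj0 orbT.
Qed.

Lemma case_S1 q t K B (chk : chkZ (leafPow q) (List.repeat (PM :: nil) t) true2 1 K B = true) :
  (t.+2 <= K)%coq_nat -> (2 * B <= 2 ^ (t + q))%N -> (q <= m)%N ->
  forall J r0, size J = t -> uniq J -> all (fun j => j \in Mset) J ->
  (forall j, j \in J -> a r0 j != 0) -> (forall i y, om (h i y) = om (h r0 y)) ->
  (2 * #|Gs| <= 2 ^ k)%N.
Proof.
move=> HK HB Hq J r0 HJt uJ JM' Ha Hom.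
have HF : forall y, (F y <= 2 ^ (m - q) * leafPow q (List.map om [seq h r y | r <- [:: r0]]))%N.
  move=> y; rewrite /= /leafPow natpowE Fh (eq_bigr (fun _ => om (h r0 y))); last by move=> i _; apply: Hom.
  rewrite prod_nat_const card_ord -{1}(subnK Hq) expnD leq_mul2r.
  apply/orP; right; elim: (m - q)%N => // e IH; rewrite !expnS leq_mul ?om_le2 //.
apply: (use_chk (rs := [:: r0]) uJ (JMa JM') Hq HF chk); rewrite ?HJt //.
by move=> x; split => //; rewrite -HJt; apply: all_PM.
Qed.

Lemma case_line i r0 (s c : int) : i != r0 -> c != 0 ->
  (forall y, h i y = s * h r0 y + c) -> pm1 s -> (2 * #|Gs| <= 2 ^ k)%N.
Proof.
move=> ir Hc Hh Hs.
have u : uniq [:: i; r0] by rewrite /= inE ir.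
apply: (witness (J := [::]) (rs := [:: i; r0]) (q := 2) _ _ (uniq_le u) (F_prod_q u (uniq_le u))) => // x.
rewrite /= /leafP Hh.
have : (om (s * h r0 x + c) * (om (h r0 x) * 1) <= 2)%N.
  case: (boolP (h r0 x == 0)) => [/eqP ->|H0].
    rewrite mulr0 add0r /om (negbTE Hc); case: ifP => //.
  have : (om (h r0 x) <= 1)%N by rewrite /om (negbTE H0); case: ifP.
  rewrite muln1 => H1; apply: (@leq_trans (2 * 1)) => //; apply: leq_mul => //; exact: om_le2.
by move=> H; rewrite -/(2 * 2)%N leq_mul2l.
Qed.

Hypothesis Hcov : forall j, exists i, a i j != 0.
Hypothesis Hsz : forall i, (1 < #|[set j | a i j != 0]|)%N.
Hypothesis Hk : (8 <= k)%N.
Hypothesis HG : (2 ^ k < 2 * #|Gs|)%N.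

Lemma contraG : (2 * #|Gs| <= 2 ^ k)%N -> False.
Proof. by move=> H; move: HG; rewrite ltnNge H. Qed.

Definition Dset (j : 'I_k) := [set r | a r j != 0].

Lemma p_inj : injective p.
Proof.
move=> i i' E; apply/eqP; apply/negPn/negP => Hne.
by move: (Hp1 i); rewrite E (Hpriv Hne).
Qed.

Lemma pickn (T : finType) (A : {set T}) n : (n <= #|A|)%N ->
  exists s : seq T, [/\ size s = n, uniq s & all (fun x => x \in A) s].
Proof.
move=> Hn; exists (take n (enum A)); split.
- by rewrite size_takel // -cardE.
- by rewrite take_uniq // enum_uniq.
- by apply/allP => x /mem_take; rewrite mem_enum.
Qed.

Lemma inM v : (v \in Mset) = [forall i, p i != v].
Proof. by rewrite inE. Qed.

Lemma notM v : v \notin Mset -> exists i, p i = v.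
Proof. by rewrite inM => /forallPn [i]; rewrite negbK => /eqP; exists i. Qed.

Lemma pnotM i : p i \notin Mset.
Proof. by rewrite inM; apply/forallPn; exists i; rewrite eqxx. Qed.

Lemma Tne r : exists v, (v \in Mset) && (a r v != 0).
Proof.
have H1 := Hsz r; rewrite (cardsD1 (p r)) inE in H1.
have H2 : (0 < #|[set j | a r j != 0] :\ p r|)%N.
  by move: H1; case: (a r (p r) != 0); rewrite ?add1n ?add0n => H; [exact: H | exact: ltnW].
have [v] : exists v, v \in [set j | a r j != 0] :\ p r by apply/card_gt0P.
rewrite !inE => /andP[vp Hv].
exists v; rewrite Hv andbT inM; apply/forallP => i; apply/eqP => E.
have ir : r != i by apply: contraNneq vp => ->; rewrite E.
by move: Hv; rewrite -E Hpriv ?eqxx.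
Qed.

Lemma cardM : #|Mset| = (k - m)%N.
Proof.
have -> : Mset = ~: [set p i | i : 'I_m].
  apply/setP => v; rewrite inM !inE; apply/forallP/negP => [H /imsetP [i _ E]|H i].
    by move: (H i); rewrite E eqxx.
  by apply/negP => /eqP E; apply: H; apply/imsetP; exists i.
rewrite cardsCs setCK card_imset ?card_ord //; exact: p_inj.
Qed.

Lemma D_gt0 v : (0 < #|Dset v|)%N.
Proof. by case: (Hcov v) => i Hi; apply/card_gt0P; exists i; rewrite inE. Qed.


Definition tcst (i : 'I_m) : int := (a i (p i) == -1)%:R.

Lemma hM i y : h i y = \sum_(j in Mset) a i j * (y j)%:R - tcst i.
Proof.
have E : \sum_(j | j \notin Mset) a i j * (y j)%:R = a i (p i) * (y (p i))%:R.
  rewrite (bigD1 (p i)) ?pnotM //= big1 ?addr0 // => j /andP[jM jp].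
  have [i' E] := notM jM; rewrite -E Hpriv ?mul0r //.
  by apply: contraNneq jp => ->; rewrite -E.
rewrite /h /fr (bigID (fun j => j \in Mset)) /= E /tcst; ring.
Qed.

Lemma pm_sq y : pm1 y -> y * y = 1.
Proof. by case/orP => /eqP ->. Qed.

Lemma mis (s x1 x2 y1 y2 : int) : pm1 s -> pm1 x1 -> pm1 x2 -> pm1 y1 -> pm1 y2 ->
  x1 = s * y1 -> x2 != s * y2 -> (x1 == x2) != (y1 == y2).
Proof. by do 5! case/orP => /eqP ->. Qed.

Lemma two_in (T : finType) (A : {set T}) x y : x \in A -> y \in A -> x != y -> (1 < #|A|)%N.
Proof.
move=> xA yA xy; apply: (@leq_trans #|[set x; y]|); first by rewrite cards2 xy.
by apply: subset_leq_card; apply/subsetP => z; rewrite !inE => /orP[] /eqP ->.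
Qed.

Lemma m_gt0 : (0 < m)%N.
Proof.
have k0 : (0 < k)%N by apply: leq_trans Hk.
by case: (Hcov (Ordinal k0)) => i _; apply: leq_ltn_trans (ltn_ord i).
Qed.

Lemma caseV : [forall r, [forall v in Mset, a r v != 0]] ->
  exists C : {set 'I_k}, [/\ (#|C| == 1%N) || (#|C| == 2%N),
     forall i, [set j | a i j != 0] = p i |: C & forall i, p i \notin C].
Proof.
move=> Hall0.
have Hall : forall r v, v \in Mset -> a r v != 0.
  move=> r v vM; have H1 := elimT forallP Hall0 r; have H2 := elimT forallP H1 v.
  by rewrite vM in H2.
pose r0 := Ordinal m_gt0.
have [v0 /andP[v0M _]] := Tne r0.
pose s i := a i v0 * a r0 v0.
have pms : forall i, pm1 (s i).
  by move=> i; rewrite /s; move: (pm1a (Hall i v0 v0M)) (pm1a (Hall r0 v0 v0M)); do 2! case/orP => /eqP ->.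
have sv0 : forall i, a i v0 = s i * a r0 v0.
  by move=> i; rewrite /s -mulrA (pm_sq (pm1a (Hall r0 v0 v0M))) mulr1.
have s0 : s r0 = 1 by rewrite /s (pm_sq (pm1a (Hall r0 v0 v0M))).
case: (pickP (fun il : 'I_m * 'I_k => (il.2 \in Mset) && (a il.1 il.2 != s il.1 * a r0 il.2))).
  move=> [i l] /andP[/= lM Hne]; exfalso; apply: contraG.
  have vl : v0 != l by apply: (contraTneq _ Hne) => <-; rewrite -sv0 eqxx.
  have ir : i != r0 by apply: (contraTneq _ Hne) => ->; rewrite s0 mul1r eqxx.
  apply: (case_sq vl v0M lM ir); rewrite ?Hall //.
  by apply: (mis (pms i)); rewrite ?pm1a ?Hall.
move=> Hno.
have Hl : forall i l, l \in Mset -> a i l = s i * a r0 l.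
  by move=> i l lM; have := Hno (i, l); rewrite /= lM /= => /negbFE /eqP.
have hs : forall i y, h i y = s i * h r0 y + (s i * tcst r0 - tcst i).
  move=> i y; rewrite !hM (eq_bigr (fun j => s i * (a r0 j * (y j)%:R))); last first.
    by move=> j jM; rewrite Hl // mulrA.
  by rewrite -mulr_sumr; ring.
case: (pickP (fun i => tcst i != s i * tcst r0)).
  move=> i Hti; exfalso; apply: contraG.
  apply: (case_line (s := s i) (c := s i * tcst r0 - tcst i)) => //.
  - by apply: (contraTneq _ Hti) => ->; rewrite s0 mul1r eqxx.
  - by rewrite subr_eq0 eq_sym.
move=> Hno2.
have Hom : forall i y, om (h i y) = om (h r0 y).
  move=> i y; rewrite hs; move: (Hno2 i) => /negbFE /eqP <-; rewrite subrr addr0.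
  by case/orP: (pms i) => /eqP ->; rewrite ?mul1r // mulN1r om_opp.
case: (leqP #|Mset| 2) => HM.
  exists Mset; split.
  - have : (0 < #|Mset|)%N by apply/card_gt0P; exists v0.
    by move: HM; case: #|Mset| => [|[|[|]]].
  - move=> i; apply/setP => j; rewrite in_setU1 [in LHS]inE.
    case: (boolP (j \in Mset)) => jM; first by rewrite Hall // orbT.
    have [i' <-] := notM jM; rewrite orbF (inj_eq p_inj).
    case: (i' =P i) => [->|/eqP ne]; first by case/orP: (Hp1 i) => /eqP ->.
    by rewrite Hpriv ?eqxx // eq_sym.
  - exact: pnotM.
exfalso; apply: contraG.
have HJ : forall J : seq 'I_k, all (fun j => j \in Mset) J -> forall j, j \in J -> a r0 j != 0.
  by move=> J /allP HJ j /HJ; apply: Hall.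
case: (ltnP m 2) => Hm1.
  have Hm : m = 1%N by move: m_gt0 Hm1; case: (m) => [|[|]].
  have [J [HJs uJ aJ]] : exists J : seq 'I_k, [/\ size J = 7%N, uniq J & all (fun x => x \in Mset) J].
    by apply: pickn; rewrite cardM Hm; move: Hk; case: (k) => [|kk] //; rewrite subn1 /=.
  by apply: (case_S1 c_S1_1 _ _ _ HJs uJ aJ (HJ _ aJ) Hom); rewrite ?Hm.
case: (ltnP m 3) => Hm2.
  have Hm : m = 2%N by move: Hm1 Hm2; case: (m) => [|[|[|]]].
  have [J [HJs uJ aJ]] : exists J : seq 'I_k, [/\ size J = 6%N, uniq J & all (fun x => x \in Mset) J].
    by apply: pickn; rewrite cardM Hm; lia.
  by apply: (case_S1 c_S1_2 _ _ _ HJs uJ aJ (HJ _ aJ) Hom); rewrite ?Hm.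
have [J [HJs uJ aJ]] : exists J : seq 'I_k, [/\ size J = 3%N, uniq J & all (fun x => x \in Mset) J].
  by apply: pickn.
by apply: (case_S1 c_S1_3 _ _ _ HJs uJ aJ (HJ _ aJ) Hom).
Qed.


Lemma inD r v : (r \in Dset v) = (a r v != 0).
Proof. by rewrite inE. Qed.

Lemma pick2 (T : finType) (A : {set T}) : (1 < #|A|)%N ->
  exists b c, [/\ b \in A, c \in A & b != c].
Proof.
move=> H; have [s [Hs us As]] := pickn H.
case: s Hs us As => [|b [|c [|]]] // _ ubc Hall.
exists b, c; split.
- by case/andP: Hall.
- by case/and3P: Hall.
- by move: ubc; rewrite /= inE; case/andP.
Qed.

Lemma caseIW v l a0 : v \in Mset -> l \in Mset -> (1 < #|Dset v|)%N -> (1 < #|Dset l|)%N ->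
  a a0 v != 0 -> a a0 l = 0 -> False.
Proof.
move=> vM lM Hv Hl H1 H2; apply: contraG.
have vl : v != l by apply: contraTneq H1 => ->; rewrite H2 eqxx.
have [b [c [bD cD bc]]] := pick2 Hl.
rewrite !inD in bD cD.
have [d] : exists d, d \in Dset v :\ a0.
  apply/card_gt0P; move: Hv; rewrite (cardsD1 a0) inD H1 /= add1n ltnS //.
rewrite !inE => /andP[da0 dv].
have a0b : a0 != b by apply: contraTneq bD => <-; rewrite H2 eqxx.
have a0c : a0 != c by apply: contraTneq cD => <-; rewrite H2 eqxx.
case: (d =P b) => [E|db].
  subst d; apply: (case_beta3 vl vM lM _ H1 H2 dv bD cD).
  by rewrite /= !inE negb_or a0b a0c bc.
case: (d =P c) => [E|dc].
  subst d; apply: (case_beta3 vl vM lM _ H1 H2 dv cD bD).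
  by rewrite /= !inE negb_or a0b a0c eq_sym bc.
apply: (case_beta4 vl vM lM _ H1 H2 bD cD dv).
rewrite /= !inE !negb_or a0b a0c eq_sym da0 bc.
by rewrite eq_sym (introN eqP db) eq_sym (introN eqP dc).
Qed.

Lemma caseII v l i : v \in Mset -> l \in Mset -> Dset v = [set i] -> (1 < #|Dset l|)%N ->
  (~~ (Dset v \subset Dset l) || (2 < #|Dset l|)%N) -> False.
Proof.
move=> vM lM Dv Hl Hor; apply: contraG.
have vl : v != l by apply: contraTneq Hl => <-; rewrite Dv cards1.
have Hv0 : forall r, r != i -> a r v = 0.
  by move=> r ri; apply/eqP/negPn; rewrite -inD Dv inE ri.
have Hvi : a i v != 0 by rewrite -inD Dv set11.
case: (boolP (i \in Dset l)) => il.
  have H3 : (2 < #|Dset l|)%N.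
    by move: Hor; rewrite Dv sub1set il.
  have [b [c [bD cD bc]]] : exists b c, [/\ b \in Dset l :\ i, c \in Dset l :\ i & b != c].
    by apply: pick2; move: H3; rewrite (cardsD1 i) il add1n ltnS.
  rewrite !inE in bD cD; case/andP: bD => bi bD; case/andP: cD => ci cD.
  apply: (case_gamma2 vl vM lM _ Hvi (Hv0 _ bi) (Hv0 _ ci)) => //.
    by rewrite /= !inE negb_or !(eq_sym i) bi ci bc.
  by rewrite -inD.
have [b [c [bD cD bc]]] := pick2 Hl.
have bi : b != i by apply: contraNneq il => <-.
have ci : c != i by apply: contraNneq il => <-.
rewrite !inD in bD cD.
apply: (case_gamma1 vl vM lM _ Hvi (Hv0 _ bi) (Hv0 _ ci)) => //.
  by rewrite /= !inE negb_or !(eq_sym i) bi ci bc.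
by apply/eqP/negPn; rewrite -inD.
Qed.


Lemma caseNA : ~~ [forall r, [forall v in Mset, a r v != 0]] -> False.
Proof.
move=> HnA.
have [r [v [vM Hrv]]] : exists r v, v \in Mset /\ a r v = 0.
  have [r Hr] := elimT forallPn HnA; have [v Hv] := elimT forallPn Hr.
  exists r, v; move: Hv; rewrite negb_imply negbK => /andP[vM /eqP H]; by split.
have [r' Hr'] := Hcov v.
have rr' : r' != r by apply: contraNneq Hr' => ->; rewrite Hrv.
have vr : (val r' != val r) by [].
case: (ltnP m 3) => Hm.
  have Hrows : forall i, i = r \/ i = r'.
    move=> i; case: (i =P r) => [->|ir]; [by left | right].
    have ir' : val i != val r by apply/eqP => E; apply: ir; apply: val_inj.
    apply: val_inj; move: (ltn_ord i) (ltn_ord r) (ltn_ord r') ir' vr; rewrite /=; lia.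
  have Hm2 : m = 2%N by move: (ltn_ord r) (ltn_ord r') vr Hm; rewrite /=; lia.
  pose B := [set w | a r w != 0].
  case: (leqP 3 #|Mset :&: B|) => HT.
    have [s [Hs us As]] := pickn HT.
    case: s Hs us As => [|w1 [|w2 [|w3 [|]]]] // _ us As.
    have Hw : forall w, w \in [:: w1; w2; w3] -> (w \in Mset) && (a r w != 0).
      by move=> w Hw; move/allP: As => /(_ w Hw); rewrite !inE.
    have vnin : v \notin [:: w1; w2; w3].
      by apply/negP => /Hw /andP[_]; rewrite Hrv eqxx.
    have j1 : w1 \in [:: w1; w2; w3] by rewrite !inE eqxx.
    have j2 : w2 \in [:: w1; w2; w3] by rewrite !inE eqxx !orbT.
    have j3 : w3 \in [:: w1; w2; w3] by rewrite !inE eqxx !orbT.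
    case/andP: (Hw _ j1) => M1 N1; case/andP: (Hw _ j2) => M2 N2; case/andP: (Hw _ j3) => M3 N3.
    apply: contraG; apply: (case_eps (r1 := r') (r2 := r) _ _ rr' Hr' Hrv N1 N2 N3).
    - by rewrite cons_uniq vnin us.
    - by rewrite /= vM M1 M2 M3.
  have HU : (4 <= #|Mset :\: B|)%N.
    have := cardsID B Mset; rewrite cardM Hm2; move: HT Hk; lia.
  have [s [Hs us As]] := pickn HU.
  case: s Hs us As => [|u1 [|u2 [|u3 [|u4 [|]]]]] // _ us As.
  have Hu : forall u, u \in [:: u1; u2; u3; u4] -> [/\ u \in Mset, a r u = 0 & a r' u != 0].
    move=> u Hu; move/allP: As => /(_ u Hu); rewrite !inE negbK => /andP[/eqP H0 uM].
    split => //; have [i Hi] := Hcov u; case: (Hrows i) Hi => -> //; by rewrite H0 eqxx.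
  have [w /andP[wM Hw]] := Tne r.
  have wnin : w \notin [:: u1; u2; u3; u4].
    by apply/negP => /Hu [_ H0 _]; move: Hw; rewrite H0 eqxx.
  have i1 : u1 \in [:: u1; u2; u3; u4] by rewrite !inE eqxx.
  have i2 : u2 \in [:: u1; u2; u3; u4] by rewrite !inE eqxx !orbT.
  have i3 : u3 \in [:: u1; u2; u3; u4] by rewrite !inE eqxx !orbT.
  have i4 : u4 \in [:: u1; u2; u3; u4] by rewrite !inE eqxx !orbT.
  case: (Hu _ i1) => M1 Z1 N1; case: (Hu _ i2) => M2 Z2 N2.
  case: (Hu _ i3) => M3 Z3 N3; case: (Hu _ i4) => M4 Z4 N4.
  apply: contraG; apply: (case_eps2 (w := w) (r1 := r') (r2 := r) _ _ rr' N1 N2 N3 N4 Z1 Z2 Z3 Z4 Hw).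
  - have -> : [:: u1; u2; u3; u4; w] = rcons [:: u1; u2; u3; u4] w by [].
    by rewrite rcons_uniq wnin us.
  - by rewrite /= M1 M2 M3 M4 wM.
case: (pickP (fun vl : 'I_k * 'I_k => [&& vl.1 \in Mset, vl.2 \in Mset, (1 < #|Dset vl.1|)%N,
    (1 < #|Dset vl.2|)%N & Dset vl.1 != Dset vl.2])).
  move=> [v1 l1] /and5P[/= v1M l1M Hv1 Hl1 Hne].
  have [a0 Ha0] : exists a0, (a0 \in Dset v1) != (a0 \in Dset l1).
    case: (boolP [exists a0, (a0 \in Dset v1) != (a0 \in Dset l1)]) => HE.
      exact: (elimT existsP HE).
    exfalso; move/eqP: Hne; apply; apply/setP => a0; have := elimT existsPn HE a0.
    by rewrite negbK => /eqP.
  case: (boolP (a0 \in Dset v1)) Ha0 => ain /= H.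
    apply: (caseIW v1M l1M Hv1 Hl1 (a0 := a0)); first by rewrite -inD.
    by apply/eqP/negPn; rewrite -inD.
  apply: (caseIW l1M v1M Hl1 Hv1 (a0 := a0)); first by rewrite -inD; move: H; case: (a0 \in Dset l1).
  by apply/eqP/negPn; rewrite -inD.
move=> HnI.
case: (pickP (fun vl : 'I_k * 'I_k => [&& vl.1 \in Mset, vl.2 \in Mset, #|Dset vl.1| == 1%N,
    (1 < #|Dset vl.2|)%N & ~~ (Dset vl.1 \subset Dset vl.2) || (2 < #|Dset vl.2|)%N])).
  move=> [v1 l1] /and5P[/= v1M l1M Hv1 Hl1 Hor].
  have [i Di] := cards1P Hv1.
  exact: (caseII v1M l1M Di Hl1 Hor).
move=> HnII.
have HnI' : forall v1 l1, v1 \in Mset -> l1 \in Mset -> (1 < #|Dset v1|)%N -> (1 < #|Dset l1|)%N ->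
    Dset v1 = Dset l1.
  move=> v1 l1 v1M l1M H1 H2; have := HnI (v1, l1); rewrite /= v1M l1M H1 H2 /=.
  by move/negbFE/eqP.
have HnII' : forall v1 l1, v1 \in Mset -> l1 \in Mset -> #|Dset v1| = 1%N -> (1 < #|Dset l1|)%N ->
    (Dset v1 \subset Dset l1) && (#|Dset l1| <= 2)%N.
  move=> v1 l1 v1M l1M H1 H2; have := HnII (v1, l1); rewrite /= v1M l1M H1 H2 /=.
  by move/negbT; rewrite negb_or negbK -leqNgt.
have deg1 : forall w, (#|Dset w| <= 1)%N -> #|Dset w| = 1%N.
  by move=> w Hw; apply/eqP; rewrite eqn_leq Hw D_gt0.
case: (pickP (fun v1 => (v1 \in Mset) && (1 < #|Dset v1|)%N)).
  move=> l0 /andP[l0M Hl0].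
  have Hrow : forall r1, r1 \in Dset l0.
    move=> r1; have [w /andP[wM Hw]] := Tne r1.
    have rw : r1 \in Dset w by rewrite inD.
    case: (ltnP 1 #|Dset w|) => Hw1; first by rewrite -(HnI' w l0 wM l0M Hw1 Hl0).
    case/andP: (HnII' w l0 wM l0M (deg1 _ Hw1) Hl0) => sub _; exact: (subsetP sub).
  have Hl0m : #|Dset l0| = m.
    have -> : Dset l0 = setT by apply/setP => r1; rewrite Hrow inE.
    by rewrite cardsT card_ord.
  have Hall2 : forall v1, v1 \in Mset -> (1 < #|Dset v1|)%N.
    move=> v1 v1M; case: (ltnP 1 #|Dset v1|) => // H1.
    case/andP: (HnII' v1 l0 v1M l0M (deg1 _ H1) Hl0) => _; rewrite Hl0m; lia.
  apply: (negP HnA); apply/forallP => r1; apply/forallP => v1; apply/implyP => v1M.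
  by rewrite -inD (HnI' v1 l0 v1M l0M (Hall2 _ v1M) Hl0); exact: Hrow.
move=> HnIII.
have Z : forall v1 r1 r2, v1 \in Mset -> a r1 v1 != 0 -> r2 != r1 -> a r2 v1 = 0.
  move=> v1 r1 r2 v1M H1 ne; apply/eqP/negPn/negP => H2.
  have := HnIII v1; rewrite /= v1M (two_in (A := Dset v1) (x := r2) (y := r1)) ?inD //.
have m0 : (0 < m)%N by lia.
have m1 : (1 < m)%N by lia.
have m2 : (2 < m)%N by lia.
pose r1 := Ordinal m0; pose r2 := Ordinal m1; pose r3 := Ordinal m2.
have n12 : r1 != r2 by []. have n13 : r1 != r3 by []. have n23 : r2 != r3 by [].
have [v1 /andP[v1M H1]] := Tne r1.
have [v2 /andP[v2M H2]] := Tne r2.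
have [v3 /andP[v3M H3]] := Tne r3.
have Z21 : a r2 v1 = 0 by apply: (Z _ _ _ v1M H1); rewrite eq_sym.
have Z31 : a r3 v1 = 0 by apply: (Z _ _ _ v1M H1); rewrite eq_sym.
have Z12 : a r1 v2 = 0 by apply: (Z _ _ _ v2M H2).
have Z32 : a r3 v2 = 0 by apply: (Z _ _ _ v2M H2); rewrite eq_sym.
have Z13 : a r1 v3 = 0 by apply: (Z _ _ _ v3M H3).
have Z23 : a r2 v3 = 0 by apply: (Z _ _ _ v3M H3).
have v12 : v1 != v2 by apply: contraTneq H2 => <-; rewrite Z21 eqxx.
have v13 : v1 != v3 by apply: contraTneq H3 => <-; rewrite Z31 eqxx.
have v23 : v2 != v3 by apply: contraTneq H3 => <-; rewrite Z32 eqxx.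
apply: contraG; apply: (case_alpha3 _ _ _ H1 Z21 Z31 Z12 H2 Z32 Z13 Z23 H3).
- by rewrite /= !inE negb_or v12 v13 v23.
- by rewrite /= v1M v2M v3M.
- by [].
Qed.

Theorem core : exists C : {set 'I_k}, [/\ (#|C| == 1%N) || (#|C| == 2%N),
     forall i, [set j | a i j != 0] = p i |: C & forall i, p i \notin C].
Proof.
case: (boolP [forall r, [forall v in Mset, a r v != 0]]) => H; first exact: caseV.
by exfalso; apply: caseNA.
Qed.

End Core.


Section Glue.
Variables (R : realType) (m k : nat) (A : 'M[R]_(m, k)).

Definition GR := [set b : {ffun 'I_k -> bool} | in_cube (A *m hvec R b)].

Lemma valR (b : {ffun 'I_k -> bool}) i : (A *m hvec R b) i 0 = \sum_j A i j * (b j)%:R.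
Proof. by rewrite mxE; apply: eq_bigr => j _; rewrite mxE. Qed.

Lemma valR_flip b i j : (A *m hvec R (flip j b)) i 0 =
  (A *m hvec R b) i 0 + A i j * ((~~ b j)%:R - (b j)%:R).
Proof.
rewrite !valR (bigD1 j) //= [in RHS](bigD1 j) //= ffunE eqxx.
rewrite (eq_bigr (fun v => A i v * (b v)%:R)); last by move=> v /negbTE Hv; rewrite ffunE Hv.
by rewrite mulrBr; ring.
Qed.

Lemma pair_exists j : (2 ^ k < 2 * #|GR|)%N -> exists b, (b \in GR) && (flip j b \in GR).
Proof.
move=> H.
have Hc : #|flip j @: GR| = #|GR| by apply: card_imset; apply: (inv_inj (flipK j)).
have := cardsUI GR (flip j @: GR); rewrite Hc addnn -mul2n.
have : (#|GR :|: flip j @: GR| <= 2 ^ k)%N.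
  by rewrite -(card_bx k); apply: max_card.
move=> H1 H2.
have : (0 < #|GR :&: flip j @: GR|)%N by lia.
move/card_gt0P => [b']; rewrite inE => /andP[b'G /imsetP [b bG E]].
by exists b; rewrite bG -E b'G.
Qed.

End Glue.

Lemma col_row0 (R : realType) m k (A : 'M[R]_(m, k)) i j : (col j (row i A) == 0) = (A i j == 0).
Proof.
apply/eqP/eqP => [/matrixP/(_ 0 0)|H]; first by rewrite !mxE.
by apply/matrixP => x y; rewrite !mxE H.
Qed.

Lemma intr_eq1 (R : realType) (x : int) : (x%:~R == 1 :> R) = (x == 1).
Proof. by rewrite -(eqr_int R x 1) mulr1z. Qed.

Theorem lemma3p5 (R : realType) (m k : nat) (A : 'M[R]_(m, k)) :
  minimal A ->
  (forall i : 'I_m, 1 < #|suppL (coordL A i)|)%N ->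
  #|suppL A| = k ->
  (8 <= k)%N ->
  (2 ^ k.-1 < tL A)%N ->
  star21 (shapeL A) \/ star32 (shapeL A).
Proof.
move=> Hmin Hsz HsA Hk Ht.
have HG : (2 ^ k < 2 * #|GR A|)%N.
  have -> : (2 ^ k = 2 * 2 ^ k.-1)%N by rewrite -expnS prednK //; lia.
  by rewrite ltn_pmul2l.
have H01R : forall i j, (A i j == 0) || (A i j == 1) || (A i j == -1).
  move=> i j; have [b /andP[bG fG]] := pair_exists j HG.
  rewrite !inE in bG fG; have Hb := elimT forallP bG i; have Hf := elimT forallP fG i.
  have E : A i j = if b j then (A *m hvec R b) i 0 - (A *m hvec R (flip j b)) i 0
                   else (A *m hvec R (flip j b)) i 0 - (A *m hvec R b) i 0.
    by rewrite valR_flip; case: (b j) => /=; ring.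
  move: E Hb Hf; set u := (A *m hvec R b) i 0; set v := (A *m hvec R (flip j b)) i 0.
  move=> E /orP[] /eqP Hu /orP[] /eqP Hv; rewrite E Hu Hv; case: (b j);
    rewrite ?subrr ?subr0 ?sub0r ?eqxx ?orbT //.
pose a i j : int := if A i j == 1 then 1 else if A i j == -1 then -1 else 0.
have HA : forall i j, A i j = (a i j)%:~R.
  have n01 : (0 == 1 :> R) = false by apply/negbTE/eqP; lra.
  have n0m1 : (0 == -1 :> R) = false by apply/negbTE/eqP; lra.
  have nm11 : (-1 == 1 :> R) = false by apply/negbTE/eqP; lra.
  move=> i j; rewrite /a; case/orP: (H01R i j) => [/orP[]|] /eqP ->.
  - by rewrite n01 n0m1.
  - by rewrite eqxx.
  - by rewrite nm11 eqxx.
have H01 : forall i j, (a i j == 0) || (a i j == 1) || (a i j == -1).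
  by move=> i j; rewrite /a; case: (A i j == 1); case: (A i j == -1).
have Hval : forall b i, (A *m hvec R b) i 0 = (fr a i b)%:~R.
  move=> b i; rewrite valR /fr.
  apply: (big_ind2 (fun (x : R) (y : int) => x = y%:~R)) => //.
    by move=> x1 x2 y1 y2 -> ->; rewrite intrD.
  by move=> j _; rewrite HA intrM; case: (b j).
have HGs : GR A = Gs a.
  apply/setP => b; rewrite !inE; apply: eq_forallb => i.
  by rewrite Hval /good /b01 intr_eq0 intr_eq1.
have Hsupp : forall i, suppL (coordL A i) = [set j | a i j != 0].
  by move=> i; apply/setP => j; rewrite !inE col_row0 HA intr_eq0.
have Hcov : forall j, exists i, a i j != 0.
  move=> j; have : j \in suppL A.
    have -> : suppL A = setT by apply/eqP; rewrite eqEcard subsetT cardsT card_ord HsA leqnn.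
    by rewrite inE.
  rewrite inE => Hc.
  case: (boolP [forall i, A i j == 0]) => Hall.
    exfalso; move/eqP: Hc; apply; apply/matrixP => x y.
    by rewrite !mxE; apply/eqP; exact: (elimT forallP Hall x).
  have [i Hi] := elimT forallPn Hall; exists i; by rewrite -(intr_eq0 R) -HA.
have Hsz' : forall i, (1 < #|[set j | a i j != 0]|)%N by move=> i; rewrite -Hsupp.
have Hpv : forall i, exists v, (a i v != 0) && [forall i', (i' != i) ==> (a i' v == 0)].
  move=> i; case: (Hmin i) => Hns _.
  have [v vS vnot] := elimT subsetPn Hns.
  exists v; rewrite Hsupp inE in vS; rewrite vS /=; apply/forallP => i'; apply/implyP => ne.
  apply: contraR vnot => H; apply/bigcupP; exists i' => //; by rewrite Hsupp inE.
pose p i := xchoose (Hpv i).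
have Hp : forall i, (a i (p i) != 0) && [forall i', (i' != i) ==> (a i' (p i) == 0)].
  by move=> i; rewrite /p; exact: (xchooseP (Hpv i)).
have Hpriv : forall i i', i' != i -> a i' (p i) = 0.
  move=> i i' ne; case/andP: (Hp i) => _ /forallP /(_ i'); rewrite ne /=; by move/eqP.
have Hp1 : forall i, (a i (p i) == 1) || (a i (p i) == -1).
  by move=> i; case/andP: (Hp i) => H _; move: (H01 i (p i)); rewrite (negbTE H).
have HG' : (2 ^ k < 2 * #|Gs a|)%N by rewrite -HGs.
have [C [HC1 HS Hpn]] := core Hpriv Hp1 H01 Hcov Hsz' Hk HG'.
have Hshape : shapeL A = [set p i |: C | i : 'I_m].
  by apply: eq_imset => i; rewrite /= Hsupp HS.
have HnotC : forall v, v \notin C -> exists i, p i = v.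
  move=> v vC; have [i Hi] := Hcov v; exists i.
  have : v \in [set j | a i j != 0] by rewrite inE.
  by rewrite HS in_setU1 (negbTE vC) orbF => /eqP.
rewrite Hshape.
case/orP: HC1 => [/cards1P [c Ec] | /cards2P [c1 [c2 [c12 Ec]]]]; rewrite Ec in Hpn HnotC *.
  left; split.
    by move=> e /imsetP [i _ ->]; rewrite cardsU1 cards1 (Hpn i).
  exists c; apply/setP => e; apply/imsetP/imsetP => [[i _ ->]|[v vC ->]].
    exists (p i); first by rewrite !inE; move: (Hpn i); rewrite inE.
    by rewrite setUC.
  rewrite in_setC in vC; have [i <-] := HnotC v vC.
  by exists i => //; rewrite setUC.
right; split.
  by move=> e /imsetP [i _ ->]; rewrite cardsU1 cards2 c12 (Hpn i).
exists c1, c2; split => //; apply/setP => e; apply/imsetP/imsetP => [[i _ ->]|[v vC ->]].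
  exists (p i); first by move: (Hpn i); rewrite !inE.
  by apply/setP => x; rewrite !inE; case: (x == p i); case: (x == c1); case: (x == c2).
rewrite in_setC in vC; have [i <-] := HnotC v vC.
exists i => //; apply/setP => x; rewrite !inE.
by case: (x == p i); case: (x == c1); case: (x == c2).
Qed.
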